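(* Let $f:\mathcal D_n^+\to\mathcal D_n^+$ be contracting for the stable semi-metric, i.e. there exists $\lambda\in(0,1)$ with $d_s(f(\Delta),f(\Delta'))\le\lambda\, d_s(\Delta,\Delta')$ for all $\Delta,\Delta'\in\mathcal D_n^+$. Then $f$ admits a unique fixed point $\Delta^*\in\mathcal D_n^+$, $\Delta^*=f(\Delta^* )$.
   Context: $\mathcal D_n^+$ is the set of $n\times n$ diagonal matrices with positive diagonal entries. The stable semi-metric is $d_s(\Delta,\Delta')=\left\|\frac{\Delta-\Delta'}{\sqrt{\Delta\Delta'}}\right\|=\max_i\frac{|\Delta_i-\Delta'_i|}{\sqrt{\Delta_i\Delta'_i}}$. *)

(* Defs.v *)
From mathcomp Require Import all_boot all_order all_algebra.
From mathcomp Require Import reals.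
Set Implicit Arguments. Unset Strict Implicit. Unset Printing Implicit Defensive.
Import Order.TTheory GRing.Theory Num.Theory.
Local Open Scope ring_scope.

Definition Dpos (R : realType) (n : nat) (A : 'M[R]_n) : bool :=
  is_diag_mx A && [forall i, 0 < A i i].

Definition ds (R : realType) (n : nat) (A B : 'M[R]_n) : R :=
  \big[Num.max/0]_(i < n) (`|A i i - B i i| / Num.sqrt (A i i * B i i)).

(* Main.v *)
Require Import Defs.
From mathcomp Require Import all_boot all_order all_algebra.
From mathcomp Require Import reals.
From mathcomp Require Import all_classical all_reals all_analysis.
From mathcomp Require Import ring lra.
Import Order.TTheory GRing.Theory Num.Theory numFieldNormedType.Exports.
Local Open Scope ring_scope.
Local Open Scope classical_set_scope.
Set Implicit Arguments. Unset Strict Implicit.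

Section H.
Variable R : realType.

Definition ee (x y : R) := `|x - y| / Num.sqrt (x * y).

Lemma ee_ge0 x y : 0 <= ee x y.
Proof. by rewrite /ee divr_ge0 ?sqrtr_ge0. Qed.

Lemma ee_le0 x y : 0 < x -> 0 < y -> ee x y <= 0 -> x = y.
Proof.
move=> x0 y0 h.
have s0 : 0 < Num.sqrt (x * y) by rewrite sqrtr_gt0 mulr_gt0.
have : `|x - y| <= 0 by move: h; rewrite /ee ler_pdivrMr // mul0r.
by rewrite normr_le0 subr_eq0 => /eqP.
Qed.

Lemma ln_half (a b : R) : 0 < a -> 0 < b -> ln a - ln b <= (a - b) / b.
Proof.
move=> a0 b0.
rewrite -ln_div ?posrE //.
have -> : a / b = 1 + ((a - b) / b) by field; rewrite gt_eqF.
apply: le_ln1Dx.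
have : 0 < a / b by rewrite divr_gt0.
have -> : a / b = 1 + ((a - b) / b) by field; rewrite gt_eqF.
lra.
Qed.

Lemma ln_le_ee (x y : R) : 0 < x -> 0 < y -> `|ln x - ln y| <= 2 * ee x y.
Proof.
move=> x0 y0.
set s := Num.sqrt x; set r := Num.sqrt y.
have s0 : 0 < s by rewrite sqrtr_gt0.
have r0 : 0 < r by rewrite sqrtr_gt0.
have xs : x = s * s by rewrite -expr2 sqr_sqrtr // ltW.
have yr : y = r * r by rewrite -expr2 sqr_sqrtr // ltW.
have lx : ln x = 2 * ln s by rewrite xs lnM ?posrE // mulr2n mulrDl mul1r.
have ly : ln y = 2 * ln r by rewrite yr lnM ?posrE // mulr2n mulrDl mul1r.
have Hee : ee x y = `|s - r| * r^-1 + `|s - r| * s^-1.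
  rewrite /ee xs yr.
  have -> : s * s * (r * r) = (s * r) ^+ 2 by ring.
  rewrite sqrtr_sqr (gtr0_norm (mulr_gt0 s0 r0)).
  have -> : s * s - r * r = (s - r) * (s + r) by ring.
  rewrite normrM (gtr0_norm (addr_gt0 s0 r0)).

  by field; rewrite (gt_eqF s0) (gt_eqF r0).
rewrite Hee lx ly -mulrBr normrM ger0_norm // ler_pM2l //.
have h1 := @ln_half s r s0 r0.
have h2 := @ln_half r s r0 s0.
have h3 : (s - r) / r <= `|s - r| * r^-1.
  by apply: ler_wpM2r; [rewrite invr_ge0 ltW | exact: ler_norm].
have h4 : (r - s) / s <= `|s - r| * s^-1.
  by apply: ler_wpM2r; [rewrite invr_ge0 ltW | rewrite distrC; exact: ler_norm].
have h5 : 0 <= `|s - r| * r^-1 by apply: mulr_ge0; rewrite // invr_ge0 ltW.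
have h6 : 0 <= `|s - r| * s^-1 by apply: mulr_ge0; rewrite // invr_ge0 ltW.
rewrite ler_norml; apply/andP; split; lra.
Qed.

Lemma bigmax_ge_seq n (F : 'I_n -> R) (r : seq 'I_n) i : i \in r ->
  F i <= \big[Num.max/0]_(j <- r) F j.
Proof.
elim: r => // a s IH.
rewrite in_cons big_cons => /orP [/eqP -> | /IH h]; rewrite le_max ?lexx //.
by rewrite h orbT.
Qed.

Lemma bigmax_ge n (F : 'I_n -> R) i : F i <= \big[Num.max/0]_(j < n) F j.
Proof. by apply: bigmax_ge_seq; rewrite mem_index_enum. Qed.

Lemma bigmax_le n (F : 'I_n -> R) c : 0 <= c -> (forall i, F i <= c) ->
  \big[Num.max/0]_(j < n) F j <= c.
Proof.
move=> c0 h; elim/big_ind: _ => // x y hx hy.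
by rewrite ge_max hx hy.
Qed.

Lemma bigmax_ge0 n (F : 'I_n -> R) : (forall i, 0 <= F i) ->
  0 <= \big[Num.max/0]_(j < n) F j.
Proof.
move=> h; elim/big_ind: _ => // x y hx hy.
by rewrite le_max hx.
Qed.

Lemma ee_cvg (a b : nat -> R) (la lb : R) : 0 < la -> 0 < lb ->
  a k @[k --> \oo] --> la -> b k @[k --> \oo] --> lb -> ee (a k) (b k) @[k --> \oo] --> ee la lb.
Proof.
move=> la0 lb0 ha hb; rewrite /ee.
apply: cvgM; first by apply: cvg_norm; apply: cvgB.
apply: cvgV; first by rewrite gt_eqF // sqrtr_gt0 mulr_gt0.
apply: (continuous_cvg _ (@sqrt_continuous R _)).
exact: cvgM.
Qed.


Lemma Dpos_eq n (A B : 'M[R]_n) : Dpos A -> Dpos B -> (forall i, A i i = B i i) -> A = B.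
Proof.
move=> /andP[/is_diag_mxP hA _] /andP[/is_diag_mxP hB _] h.
apply/matrixP => i j; case: (eqVneq i j) => [<-|ij]; first exact: h.
by rewrite hA ?hB.
Qed.

Lemma Dpos_pos n (A : 'M[R]_n) i : Dpos A -> 0 < A i i.
Proof. by move=> /andP[_ /forallP]. Qed.

Lemma ds_ee n (A B : 'M[R]_n) i : ee (A i i) (B i i) <= ds A B.
Proof. have := @bigmax_ge _ (fun i => ee (A i i) (B i i)) i. rewrite /ds /ee /=. move=> h. exact: h. Qed.

Lemma ds_ge0 n (A B : 'M[R]_n) : 0 <= ds A B.
Proof. apply: (@bigmax_ge0 _ (fun i => ee (A i i) (B i i))) => i; exact: ee_ge0. Qed.

End H.

Unset Implicit Arguments.

Theorem theorem2 (R : realType) (n : nat) (f : 'M[R]_n -> 'M[R]_n)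
  (hf : forall D, Dpos D -> Dpos (f D))
  (lambda : R) (hl0 : 0 < lambda) (hl1 : lambda < 1)
  (hc : forall D D', Dpos D -> Dpos D' -> ds (f D) (f D') <= lambda * ds D D') :
  exists Dstar, [/\ Dpos Dstar, Dstar = f Dstar &
    forall D, Dpos D -> D = f D -> D = Dstar].
Proof.
pose X k := iter k f 1%:M.
have HX : forall k, Dpos (X k).
  elim => [|k IH]; last exact: hf.
  rewrite /X /= /Dpos scalar_mx_is_diag /=; apply/forallP => i.
  by rewrite mxE eqxx /= ltr01.
pose a := ds (X 0%N) (X 1%N).
have a0 : 0 <= a by exact: ds_ge0.
have Hd : forall k, ds (X k) (X k.+1) <= lambda ^+ k * a.
  elim => [|k IH]; first by rewrite expr0 mul1r.
  rewrite exprS -mulrA; apply: le_trans (hc _ _ (HX k) (HX k.+1)) _.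
  by rewrite ler_pM2l.
have Hu : forall i k, `|ln (X k.+1 i i) - ln (X k i i)| <= 2 * (lambda ^+ k * a).
  move=> i k; rewrite distrC.
  apply: le_trans (ln_le_ee (Dpos_pos i (HX k)) (Dpos_pos i (HX k.+1))) _.
  rewrite ler_pM2l //; exact: le_trans (ds_ee _ _ i) (Hd k).
have Hcv : forall i, cvgn (fun k => ln (X k i i)).
  move=> i; set u := fun k => ln (X k i i).
  pose c := 2 * a / (1 - lambda).
  have c0 : 0 <= c.
    by rewrite /c; apply: divr_ge0; [apply: mulr_ge0 | rewrite subr_ge0 ltW].
  have step : forall k, c * lambda ^+ k - c * lambda ^+ k.+1 = 2 * (lambda ^+ k * a).
    move=> k; rewrite exprS /c; field.
    by rewrite subr_eq0 eq_sym lt_eqF.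
  have v_dec : {homo (fun k => u k + c * lambda ^+ k) : p q / (p <= q)%N >-> q <= p}.
    apply/nonincreasing_seqP => k /=.
    have := Hu i k; rewrite ler_norml => /andP[_ h].
    have := step k; rewrite /u; lra.
  have w_inc : {homo (fun k => u k - c * lambda ^+ k) : p q / (p <= q)%N >-> p <= q}.
    apply/nondecreasing_seqP => k /=.
    have := Hu i k; rewrite ler_norml => /andP[h _].
    have := step k; rewrite /u; lra.
  have vc : cvgn (fun k => u k + c * lambda ^+ k).
    apply: nonincreasing_is_cvgn v_dec _.
    exists (u 0%N - c * lambda ^+ 0) => _ [k _ <-].
    have := w_inc 0%N k (leq0n k) => /= h.
    have : 0 <= c * lambda ^+ k by rewrite mulr_ge0 // exprn_ge0 // ltW.
    lra.
  move: vc; set v := (fun k => u k + c * lambda ^+ k) => vc.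
  apply/cvg_ex; exists (limn v - c * 0).
  have -> : u = fun k => v k - c * lambda ^+ k.
    by apply: funext => k; rewrite /v addrK.
  apply: cvgB; first exact: vc.
  apply: cvgM; first exact: cvg_cst.
  by apply: cvg_expr; rewrite gtr0_norm.
pose L i := limn (fun k => ln (X k i i)).
pose Ds := diag_mx (\row_i expR (L i)).
have Dsii : forall i, Ds i i = expR (L i) by move=> i; rewrite !mxE eqxx mulr1n.
have DposDs : Dpos Ds.
  rewrite /Dpos diag_mx_is_diag /=; apply/forallP => i.
  by rewrite Dsii expR_gt0.
have HXc : forall i, X k i i @[k --> \oo] --> Ds i i.
  move=> i; rewrite Dsii.
  have -> : (fun k => X k i i) = expR \o (fun k => ln (X k i i)).
    by apply: funext => k /=; rewrite lnK // posrE (Dpos_pos i (HX k)).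
  apply: continuous_cvg; first exact: continuous_expR.
  exact: Hcv.
have Hds0 : ds (X k) Ds @[k --> \oo] --> 0.
  apply/cvgrPdist_le => eps eps0.
  have h : forall i, \forall k \near \oo, ee (X k i i) (Ds i i) <= eps.
    move=> i.
    have hcst : Ds i i @[k --> \oo] --> Ds i i by exact: cvg_cst.
    have := ee_cvg (Dpos_pos i DposDs) (Dpos_pos i DposDs) (HXc i) hcst.
    have -> : ee (Ds i i) (Ds i i) = 0 by rewrite /ee subrr normr0 mul0r.
    move/cvgrPdist_le/(_ eps eps0); apply: filterS => k.
    by rewrite sub0r normrN ger0_norm // ee_ge0.
  have hh : \forall k \near \oo, forall i, ee (X k i i) (Ds i i) <= eps.
    exact: filter_forall.
  move: hh; apply: filterS => k hk.
  rewrite sub0r normrN ger0_norm ?ds_ge0 //.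
  by apply: bigmax_le => //; exact: ltW.
pose y := f Ds.
have Dposy : Dpos y by exact: hf.
have Hi : forall i, Ds i i = y i i.
  move=> i; apply: ee_le0; [exact: Dpos_pos | exact: Dpos_pos |].
  have c1 : ee (X k.+1 i i) (y i i) @[k --> \oo] --> ee (Ds i i) (y i i).
    apply: ee_cvg; [exact: Dpos_pos | exact: Dpos_pos | | exact: cvg_cst].
    have := HXc i; rewrite -cvg_shiftS; exact.
  have c2 : lambda * ds (X k) Ds @[k --> \oo] --> lambda * 0.
    by apply: cvgM; [exact: cvg_cst | exact: Hds0].
  rewrite -(mulr0 lambda).
  apply: (ler_cvg_to c1 c2); apply: nearW => k.
  exact: le_trans (ds_ee _ _ i) (hc _ _ (HX k) DposDs).
have HDs : Ds = f Ds by apply: Dpos_eq.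
exists Ds; split => // D DD HD.
apply: Dpos_eq => // i; apply: ee_le0; [exact: Dpos_pos | exact: Dpos_pos |].
have h := hc D Ds DD DposDs; rewrite -HD -HDs in h.
have := ds_ee D Ds i; have := ds_ge0 D Ds; nra.
Qed.
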